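(* For sufficiently large absolute constants $a$ and $b$ the following holds. Let $A$ be a finite multiset of $n$ points in $\mathbb{R}^d$ with mean $\mu$, and $\varepsilon,\delta\in(0,1)$. Let $k=b\log\delta^{-1}$ and for $i=1,\dots,k$ let $\hat\mu_i$ be the average of $a\varepsilon^{-1}$ points drawn independently and uniformly at random from $A$ (all draws independent). Let $r=\frac{1}{11}\sqrt{\frac{\varepsilon\,\mathrm{Opt}}{n}}$ and let $G=\{i:\|\hat\mu_i-\mu\|\le r\}$. Then with probability at least $1-\delta$ the event $\mathcal{E}=\{|G|\ge\frac{7}{10}\,b\log\delta^{-1}\}$ holds.
   Context: $\mu=\frac1n\sum_{p\in A}p$ and $\mathrm{Opt}=\sum_{p\in A}\|p-\mu\|^2$ (Euclidean norm). Integrality of $k$ and $a\varepsilon^{-1}$ is ignored. *)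

(* Defs.v *)
From HB Require Import structures.
From mathcomp Require Import all_boot all_order all_algebra.
From mathcomp Require Import reals exp.
Set Implicit Arguments. Unset Strict Implicit. Unset Printing Implicit Defensive.
Import Order.TTheory GRing.Theory Num.Theory.
Local Open Scope ring_scope.

Section Defs.
Variables (R : realType) (d n : nat).

Definition enorm (v : 'rV[R]_d) : R := Num.sqrt (\sum_(j < d) v ord0 j ^+ 2).

(* The multiset A of n points is given by an indexing p : 'I_n -> R^d. *)
Definition mean (p : 'I_n -> 'rV[R]_d) : 'rV[R]_d := n%:R^-1 *: \sum_(i < n) p i.

Definition Opt (p : 'I_n -> 'rV[R]_d) : R :=
  \sum_(i < n) enorm (p i - mean p) ^+ 2.

Definition ceiln (x : R) : nat := `|Num.ceil x|%N.

(* Sample space: for each of k estimators, m independent uniform indices into A. *)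
Definition sample_space (k m : nat) := {ffun 'I_k -> {ffun 'I_m -> 'I_n}}.

Definition est (p : 'I_n -> 'rV[R]_d) (k m : nat) (w : sample_space k m) (i : 'I_k)
  : 'rV[R]_d := m%:R^-1 *: \sum_(j < m) p (w i j).

Definition uprob (k m : nat) (E : pred (sample_space k m)) : R :=
  #|E|%:R / #|{: sample_space k m}|%:R.

End Defs.

Arguments uprob {R n k m} E.

(* Main.v *)
Require Import Defs.
From HB Require Import structures.
From mathcomp Require Import all_boot all_order all_algebra.
From mathcomp Require Import reals exp.
From mathcomp Require Import sequences.
From mathcomp Require Import ring lra zify.
Import Order.TTheory GRing.Theory Num.Theory.

Lemma card_sum (I : finType) (b : pred I) : #|[set i | b i]| = \sum_i (b i : nat).
Proof.
rewrite -sum1_card big_mkcond /=; apply: eq_bigr => i _; rewrite inE; by case: (b i).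
Qed.

Lemma stepB (V : finType) (k : nat) (bad : pred V) : 1023 * #|bad| <= #|V| ->
  #|[pred w : {ffun 'I_k -> V} | 3 * k < 10 * #|[set i | bad (w i)]| ]| * 4 ^ k
   <= #|V| ^ k.
Proof.
move=> hb.
set f := fun w : {ffun 'I_k -> V} => #|[set i | bad (w i)]|.
set Ec := [pred w : {ffun 'I_k -> V} | 3 * k < 10 * f w].
have h1 : #|Ec| * 8 ^ k <= \sum_(w : {ffun 'I_k -> V}) 1024 ^ f w.
  rewrite -sum_nat_const big_mkcond /=; apply: leq_sum => w _.
  case: ifP => // hw.
  rewrite (_ : 8 = 2 ^ 3) // (_ : 1024 = 2 ^ 10) // -!expnM leq_exp2l //.
  by rewrite ltnW.
have h2 : \sum_(w : {ffun 'I_k -> V}) 1024 ^ f w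
    = \prod_(i < k) \sum_(v : V) 1024 ^ (bad v : nat).
  rewrite bigA_distr_bigA /=; apply: eq_bigr => w _.
  by rewrite /f card_sum expn_sum.
have h3 : \sum_(v : V) 1024 ^ (bad v : nat) <= 2 * #|V|.
  have -> : \sum_(v : V) 1024 ^ (bad v : nat) = #|V| + 1023 * #|bad|.
    rewrite (eq_bigr (fun v => 1 + 1023 * (bad v : nat))); last by move=> v _; case: (bad v).
    rewrite big_split /= sum1_card -big_distrr /=; congr (_ + 1023 * _).
    symmetry; rewrite -sum1_card big_mkcond /=; apply: eq_bigr => v _; rewrite unfold_in; by case: (bad v).
  by rewrite mul2n -addnn leq_add2l.
have h4 : \prod_(i < k) \sum_(v : V) 1024 ^ (bad v : nat) <= 2 ^ k * #|V| ^ k.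
  have -> : (2 ^ k * #|V| ^ k) = \prod_(i < k) (2 * #|V|) by rewrite prod_nat_const card_ord expnMn.
  by apply: leq_prod => i _; exact: h3.
have h5 : #|Ec| * 4 ^ k * 2 ^ k <= #|V| ^ k * 2 ^ k.
  have e8 : 8 ^ k = 4 ^ k * 2 ^ k by rewrite -expnMn.
  rewrite -mulnA -e8; apply: leq_trans h1 _; rewrite h2.
  by apply: leq_trans h4 _; rewrite mulnC.
by rewrite leq_pmul2r ?expn_gt0 in h5.
Qed.

Local Open Scope ring_scope.

Section Aux.
Variable R : realType.

Lemma sum_ffun_prod (I J : finType) (g : I -> J -> R) :
  \sum_(v : {ffun I -> J}) \prod_i g i (v i) = \prod_i \sum_x g i x.
Proof. by rewrite bigA_distr_bigA. Qed.

Lemma sum_ffun1 (I J : finType) (j : I) (h : J -> R) :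
  \sum_(v : {ffun I -> J}) h (v j) = (\sum_x h x) * #|J|%:R ^+ #|I|.-1.
Proof.
pose g i := if i == j then h else fun _ : J => 1 : R.
transitivity (\sum_(v : {ffun I -> J}) \prod_i g i (v i)).
  apply: eq_bigr => v _; rewrite (bigD1 j) //= /g eqxx big1 ?mulr1 //.
  by move=> i /negPf ->.
rewrite sum_ffun_prod (bigD1 j) //= /g eqxx; congr (_ * _).
rewrite (eq_bigr (fun _ => #|J|%:R)); last first.
  by move=> i /negPf ->; rewrite sumr_const.
by rewrite prodr_const cardC1.
Qed.

Lemma sum_ffun2 (I J : finType) (j j' : I) (h1 h2 : J -> R) :
  j != j' -> \sum_x h1 x = 0 ->
  \sum_(v : {ffun I -> J}) h1 (v j) * h2 (v j') = 0.
Proof.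
move=> jj' h10.
pose g i := if i == j then h1 else if i == j' then h2 else fun _ : J => 1 : R.
transitivity (\sum_(v : {ffun I -> J}) \prod_i g i (v i)).
  apply: eq_bigr => v _; rewrite (bigD1 j) //= /g eqxx (bigD1 j') /=; last by rewrite eq_sym.
  rewrite eq_sym (negPf jj') eqxx big1 ?mulr1 //.
  by move=> i /andP[/negPf -> /negPf ->].
by rewrite sum_ffun_prod (bigD1 j) //= /g eqxx h10 mul0r.
Qed.


Lemma enorm2 (d : nat) (x : 'rV[R]_d) : enorm x ^+ 2 = \sum_(c < d) x ord0 c ^+ 2.
Proof. by rewrite /enorm sqr_sqrtr // sumr_ge0 // => c _; rewrite sqr_ge0. Qed.

Lemma sq_sum (I : finType) (a : I -> R) :
  (\sum_i a i) ^+ 2 = \sum_i \sum_j a i * a j.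
Proof. by rewrite expr2 mulr_suml; apply: eq_bigr => i _; rewrite mulr_sumr. Qed.

Lemma var_sum (m n : nat) (y : 'I_n -> R) : \sum_i y i = 0 ->
  \sum_(v : {ffun 'I_m -> 'I_n}) (\sum_j y (v j)) ^+ 2
   = m%:R * n%:R ^+ m.-1 * \sum_i y i ^+ 2.
Proof.
move=> y0.
under eq_bigr do rewrite sq_sum.
rewrite exchange_big /=.
have H j : \sum_(j0 < m) \sum_(v : {ffun 'I_m -> 'I_n}) y (v j) * y (v j0)
   = (\sum_x y x * y x) * n%:R ^+ m.-1.
  rewrite (bigD1 j) //= [X in _ + X]big1 ?addr0; last first.
    by move=> j' jj'; apply: sum_ffun2; rewrite // eq_sym.
  by rewrite (@sum_ffun1 _ _ j (fun x => y x * y x)) !card_ord.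
under eq_bigr => j _ do rewrite exchange_big /= H.
rewrite sumr_const card_ord.
under [X in _ = _ * X]eq_bigr do rewrite expr2.
rewrite -mulr_natl; ring.
Qed.

Lemma est_var (d n m : nat) (p : 'I_n -> 'rV[R]_d) : (0 < n)%N -> (0 < m)%N ->
  \sum_(v : {ffun 'I_m -> 'I_n}) enorm (m%:R^-1 *: \sum_j p (v j) - mean p) ^+ 2
  = m%:R^-1 * n%:R ^+ m.-1 * Opt p.
Proof.
move=> n0 m0.
have m0' : m%:R != 0 :> R by rewrite pnatr_eq0 -lt0n.
have n0' : n%:R != 0 :> R by rewrite pnatr_eq0 -lt0n.
set mu := mean p.
pose y (c : 'I_d) (i : 'I_n) := p i ord0 c - mu ord0 c.
have coord (v : {ffun 'I_m -> 'I_n}) (c : 'I_d) (u : 'rV[R]_d) : (m%:R^-1 *: \sum_j p (v j) - u) ord0 c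
    = m%:R^-1 * \sum_(j < m) (p (v j) ord0 c - u ord0 c).
  rewrite !mxE summxE sumrB sumr_const card_ord mulrBr; congr (_ - _).
  by field.
have y0 c : \sum_i y c i = 0.
  rewrite /y sumrB sumr_const card_ord /mu /mean !mxE summxE.
  by field.
transitivity (\sum_(c < d) m%:R^-1 ^+ 2 *
   \sum_(v : {ffun 'I_m -> 'I_n}) (\sum_j y c (v j)) ^+ 2).
  under eq_bigr do rewrite enorm2.
  rewrite exchange_big /=; apply: eq_bigr => c _.
  rewrite mulr_sumr; apply: eq_bigr => v _.
  by rewrite coord exprMn.
under eq_bigr do rewrite var_sum //.
have e i c : (p i - mu) ord0 c = y c i by rewrite /y !mxE.
have -> : Opt p = \sum_(i < n) \sum_(c < d) y c i ^+ 2.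
  by apply: eq_bigr => i _; rewrite enorm2; apply: eq_bigr => c _; rewrite e.
rewrite exchange_big /= mulr_sumr; apply: eq_bigr => c _.
by field.
Qed.

End Aux.

Lemma lin710 (R : realType) (x y : R) : x < 7%:R / 10%:R * y -> 10%:R * x < 7%:R * y.
Proof. move=> h; lra. Qed.

Lemma nat37 (g f k : nat) : (g + f)%N = k -> (10 * g < 7 * k)%N -> (3 * k < 10 * f)%N.
Proof. move=> h1 h2; lia. Qed.

Lemma final_ineq (R : realType) (e c t q dl : R) : 0 < t -> e + c = t -> c * q <= t ->
  1 <= dl * q -> 0 <= c -> 0 < dl -> 1 - dl <= e / t.
Proof. move=> t0 h1 h2 h3 h4 h5; rewrite ler_pdivlMr //; nra. Qed.

Theorem lemma3p2 :
  exists a0 b0 : rat,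
  forall (R : realType) (a b : R), ratr a0 <= a -> ratr b0 <= b ->
  forall (d n : nat) (p : 'I_n -> 'rV[R]_d) (eps delta : R),
  (0 < n)%N -> 0 < eps < 1 -> 0 < delta < 1 ->
  let k := ceiln (b * ln delta^-1) in
  let m := ceiln (a / eps) in
  let r := 11%:R^-1 * Num.sqrt (eps * Opt p / n%:R) in
  1 - delta <=
  uprob (R := R) (fun w : sample_space n k m =>
    (7%:R / 10%:R * (b * ln delta^-1)
       <= #|[set i : 'I_k | enorm (est p w i - mean p) <= r]|%:R)).
Proof.
exists ((121 * 1024)%N%:R), 1.
move=> R a b ha hb d n p eps delta n0 /andP[e0 eh1] /andP[d0 d1].
cbv zeta.
set k := ceiln (b * ln delta^-1).
set m := ceiln (a / eps).
set r := 11%:R^-1 * Num.sqrt (eps * Opt p / n%:R).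
rewrite ratr_nat natrM in ha; rewrite rmorph1 in hb.
set L := ln delta^-1.
have L0 : 0 < L by rewrite /L ln_gt0 // invf_gt1.
have a0 : 0 < a by apply: lt_le_trans ha; rewrite mulr_gt0 // ltr0n.
have b0 : 0 < b by apply: lt_le_trans hb.
have ceilP x : 0 < x -> x <= (ceiln x)%:R /\ (0 < ceiln x)%N.
  move=> x0; rewrite /ceiln natr_absz gtr0_norm ?ceil_gt0 //; split.
    exact: ceil_ge.
  by rewrite absz_gt0 ceil_neq0 x0 orbT.
have [hk k0] : b * L <= k%:R /\ (0 < k)%N by apply: ceilP; rewrite mulr_gt0.
have [hm m0] : a / eps <= m%:R /\ (0 < m)%N by apply: ceilP; rewrite divr_gt0.
pose V := ({ffun 'I_m -> 'I_n} : finType).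
pose x1 (v : V) := m%:R^-1 *: \sum_j p (v j) - mean p.
pose bad := [pred v : V | r < enorm (x1 v)].
have r0 : 0 <= r by rewrite mulr_ge0 // ?invr_ge0 ?ler0n // sqrtr_ge0.
have Opt0 : 0 <= Opt p by rewrite sumr_ge0 // => i _; rewrite sqr_ge0.
have hS := @est_var R d n m p n0 m0.
have hA : ((1024 * #|bad|)%N%:R <= #|V|%:R :> R).
  have cV : #|V| = (n ^ m)%N by rewrite card_ffun !card_ord.
  case: (eqVneq (Opt p) 0) => [O0 | O0].
    suff -> : #|bad| = 0%N by rewrite muln0 ler0n.
    apply: eq_card0 => v; rewrite !inE; apply/negbTE; rewrite -leNgt.
    rewrite O0 mulr0 in hS.
    have := @psumr_eq0P _ _ _ _ (fun v _ => sqr_ge0 _) hS v isT.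
    move/eqP; rewrite sqrf_eq0 => /eqP ->; exact: r0.
  have Op : 0 < Opt p by rewrite lt0r O0 Opt0.
  have r2 : r ^+ 2 = 121%:R^-1 * (eps * Opt p / n%:R).
    rewrite /r exprMn sqr_sqrtr; last by rewrite divr_ge0 ?ler0n // mulr_ge0 // ltW.
    by rewrite exprVn -natrX.
  have hF : #|bad|%:R * r ^+ 2 <= m%:R^-1 * n%:R ^+ m.-1 * Opt p.
    rewrite -hS.
    apply: (@le_trans _ _ (\sum_(v in bad) enorm (x1 v) ^+ 2)).
      rewrite mulrC mulr_natr -sumr_const; apply: ler_sum => v; rewrite inE => hv.
      by apply: lerXn2r; rewrite ?nnegrE ?(ltW hv) // /enorm sqrtr_ge0.
    rewrite [leRHS](bigID (mem bad)) /= lerDl sumr_ge0 // => v _; exact: sqr_ge0.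
  set X := n%:R ^+ m.-1 in hF.
  have hN : #|V|%:R = n%:R * X :> R by rewrite cV natrX -exprS prednK.
  have nz : n%:R != 0 :> R by rewrite pnatr_eq0 -lt0n.
  have mz : m%:R != 0 :> R by rewrite pnatr_eq0 -lt0n.
  have F0 : 0 <= #|bad|%:R :> R by rewrite ler0n.
  have h1 : #|bad|%:R * eps * m%:R <= 121%:R * (n%:R * X).
    have e : #|bad|%:R * r ^+ 2 = (#|bad|%:R * eps * m%:R) * (Opt p / (121%:R * n%:R * m%:R)).
      by rewrite r2; field; rewrite nz mz.
    have e' : m%:R^-1 * X * Opt p = (121%:R * (n%:R * X)) * (Opt p / (121%:R * n%:R * m%:R)).
      by field; rewrite nz mz.
    rewrite e e' ler_pM2r in hF; first exact: hF.
    apply: divr_gt0 => //; rewrite !mulr_gt0 // ltr0n //.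
  have h2 : 121%:R * 1024%:R <= eps * m%:R.
    apply: le_trans ha _; rewrite mulrC -ler_pdivrMr //.
  rewrite natrM hN; nra.
have hA' : (1023 * #|bad| <= #|V|)%N.
  rewrite ler_nat in hA; apply: leq_trans hA; by rewrite leq_mul2r orbT.
have hB := @stepB V k bad hA'.
have d4 : 1 <= delta * 4%:R ^+ k.
  have eL : expR L = delta^-1 by rewrite /L lnK // posrE invr_gt0.
  have h12 : 2^-1 <= expR (-(2^-1)) :> R.
    apply: le_trans (expR_ge1Dx _); lra.
  have em1 : expR (-1) = expR (-(2^-1)) ^+ 2 :> R.
    rewrite -expRM_natl; congr expR; by field.
  have e1m : expR 1 * expR (-1) = 1 :> R by rewrite expRN mulfV // gt_eqF // expR_gt0.
  have e14 : expR 1 <= 4%:R :> R.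
    have q : 4%:R^-1 <= expR (-1) :> R by rewrite em1; nra.
    have g := expR_gt0 (1 : R).
    have := mulr_ge0 (ltW g) (_ : 0 <= 4%:R * expR (-1) - 1 :> R); nra.
  have hLk : L <= k%:R by nra.
  have : delta^-1 <= 4%:R ^+ k.
    rewrite -eL; apply: (le_trans (y := expR k%:R)); first by rewrite ler_expR.
    rewrite -[k%:R]mulr1 expRM_natl; apply: lerXn2r; rewrite ?nnegrE ?expR_ge0 //.
  move=> h; have dd : delta * delta^-1 = 1 by rewrite mulfV // gt_eqF.
  rewrite -[X in X <= _]dd ler_pM2l //.
set E := (fun w : sample_space n k m => _).
set Ec := [pred w : {ffun 'I_k -> V} | (3 * k < 10 * #|[set i | bad (w i)]|)%N].
have sub : (#|[predC E]| <= #|Ec|)%N.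
  apply: subset_leq_card; apply/subsetP => w; rewrite !inE => hw.
  pose G := [set i : 'I_k | enorm (est p w i - mean p) <= r].
  have {}hw : ~~ (7%:R / 10%:R * (b * L) <= #|G|%:R) := hw.
  have cG : (#|G| + #|[set i | bad (w i)]|)%N = k.
    rewrite -[RHS](card_ord k) -(cardsC G); congr (_ + _)%N; apply: eq_card => i.
    by rewrite !inE ltNge.
  rewrite -ltNge in hw.
  have : (10 * #|G| < 7 * k)%N.
    rewrite -(ltr_nat R) !natrM.
    have : #|G|%:R < 7%:R / 10%:R * k%:R :> R.
      apply: lt_le_trans hw _; rewrite ler_pM2l // divr_gt0 // ltr0n //.
    exact: lin710.
  move=> h; exact (nat37 _ _ _ cG h).
have cV0 : (0 < #|V|)%N by rewrite card_ffun card_ord expn_gt0 n0.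
have cT : #|{: sample_space n k m}| = (#|V| ^ k)%N by rewrite card_ffun !card_ord.
have cC := cardC E.
rewrite /uprob cT.
have hC : (#|[predC E]| * 4 ^ k <= #|V| ^ k)%N.
  by apply: leq_trans hB; rewrite leq_mul2r sub orbT.
rewrite cT in cC.
apply: (@final_ineq R _ (#|[predC E]|%:R) _ (4%:R ^+ k) delta) => //.
all: first [by rewrite ltr0n expn_gt0 cV0 | by rewrite -natrD cC
  | by rewrite -natrX -natrM ler_nat | by rewrite ler0n].
Qed.
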